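(* Let $\Gamma$ be the first Grigorchuk group with generators $a,b,c,d$, acting on the right on $\{0,1\}^{\mathbb N}$, and let $\rho=111\cdots$. For a word $w=w_1\cdots w_n$ over $\{a,b,c,d\}$ set $\delta(w)=\#\{\rho\,w_{i+1}\cdots w_n: i=0,\dots,n\}$, and let $\Delta(n)=\max\{\delta(w): w\text{ a word over }\{a,b,c,d\},\ |w|=n\}$. Let $\eta$ be the real root of $t^3+t^2+t-2$ and $\alpha=\log 2/\log(2/\eta)$. Then $\Delta(n)\preceq n^\alpha$.
   Context: The first Grigorchuk group $\Gamma$ is the group of permutations of $\{0,1\}^{\mathbb N}$ (acting on the right) generated by $a,b,c,d$, defined recursively for $x\in\{0,1\}$ and infinite binary sequences $u$ by: $(xu)a=(1-x)u$; $(0u)b=0(ua)$, $(1u)b=1(uc)$; $(0u)c=0(ua)$, $(1u)c=1(ud)$; $(0u)d=0u$, $(1u)d=1(ub)$. For functions $f,g:\mathbb N\to\mathbb R_+$, $g\preceq f$ means there is $C>0$ with $g(n)\le f(Cn)$ for all sufficiently large $n$. *)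

(* Defs.v *)
From mathcomp Require Import all_boot.
From Stdlib Require Import ClassicalEpsilon.

Set Implicit Arguments.
Unset Strict Implicit.
Unset Printing Implicit Defensive.

Inductive gen := Ga | Gb | Gc | Gd.

(* Points of {0,1}^N are functions nat -> bool (false = 0, true = 1). *)
Definition point := nat -> bool.

Definition shift (u : point) : point := fun n => u n.+1.

(* gact g u n = the n-th letter of (u)g, defined by recursion on the
   position n, following the recursive definition of a, b, c, d. *)
Fixpoint gact (g : gen) (u : point) (n : nat) {struct n} : bool :=
  match n with
  | 0 => match g with Ga => ~~ u 0 | _ => u 0 end
  | k.+1 =>
      match g with
      | Ga => u k.+1
      | Gb => if u 0 then gact Gc (shift u) k else gact Ga (shift u) k
      | Gc => if u 0 then gact Gd (shift u) k else gact Ga (shift u) k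
      | Gd => if u 0 then gact Gb (shift u) k else u k.+1
      end
  end.

Definition rho : point := fun _ => true.

(* Right action of a word w = w_1 ... w_n : apply w_1 first, then w_2, ... *)
Definition wact (u : point) (w : seq gen) : point := foldl (fun v g => gact g v) u w.

Definition orbpt (w : seq gen) (i : nat) : point := wact rho (drop i w).

(* i is the first index giving its point (classical decision on equality of
   infinite sequences). *)
Definition is_new (w : seq gen) (i : nat) : bool :=
  if excluded_middle_informative (forall j, j < i -> orbpt w j <> orbpt w i)
  then true else false.

Definition delta (w : seq gen) : nat := count (is_new w) (iota 0 (size w).+1).

Fixpoint words (n : nat) : seq (seq gen) :=
  match n with
  | 0 => [:: [::]]
  | k.+1 => flatten [seq [seq g :: w | g <- [:: Ga; Gb; Gc; Gd]] | w <- words k]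
  end.

Definition DeltaG (n : nat) : nat := \max_(w <- words n) delta w.

(* Main.v *)
Require Import Defs.
From Stdlib Require Import Reals Lra Psatz.
From Coquelicot Require Import Coquelicot.
Local Open Scope R_scope.
Lemma exp_conv a t : 0 <= a <= 1 -> exp (a * t) <= 1 - a + a * exp t.
Proof.
intros Ha.
set (h := fun s => 1 - a + a * exp s - exp (a * s)).
set (h' := fun s => a * exp s - a * exp (a * s)).
assert (Hd : forall s, derivable_pt_lim h s (h' s)).
{ intros s. apply is_derive_Reals. unfold h, h'. auto_derive; auto. ring. }
assert (H0 : h 0 = 0). { unfold h. rewrite Rmult_0_r, exp_0. ring. }
assert (Hh : 0 <= h t).
{ destruct (Rtotal_order t 0) as [Hlt | [Heq | Hgt]].
  - destruct (MVT_cor3 h h' t 0 Hlt (fun x _ _ => Hd x)) as [c [Hc1 [Hc2 Hc]]].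
    assert (h' c <= 0).
    { unfold h'. assert (exp c <= exp (a * c)).
      { destruct (Req_dec c (a*c)) as [E|E]. rewrite <- E; lra.
        left; apply exp_increasing; nra. }
      nra. }
    nra.
  - subst; lra.
  - destruct (MVT_cor3 h h' 0 t Hgt (fun x _ _ => Hd x)) as [c [Hc1 [Hc2 Hc]]].
    assert (0 <= h' c).
    { unfold h'. assert (exp (a*c) <= exp c).
      { destruct (Req_dec c (a*c)) as [E|E]. rewrite <- E; lra.
        left; apply exp_increasing; nra. }
      nra. }
    nra. }
unfold h in Hh. lra.
Qed.

Lemma bern a r : 0 <= a <= 1 -> 0 < r -> Rpower r a <= 1 - a + a * r.
Proof.
intros Ha Hr. unfold Rpower.
pose proof (exp_conv a (ln r) Ha) as H. rewrite exp_ln in H; lra.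
Qed.

Lemma Rpower_pos x a : 0 < Rpower x a.
Proof. unfold Rpower; apply exp_pos. Qed.

Lemma jensen a u v : 0 <= a <= 1 -> 0 < u -> 0 < v ->
  Rpower u a + Rpower v a <= 2 * Rpower ((u + v) / 2) a.
Proof.
intros Ha Hu Hv.
set (m := (u + v) / 2).
assert (Hm : 0 < m) by (unfold m; lra).
assert (Eu : u = m * (u / m)) by (field; lra).
assert (Ev : v = m * (v / m)) by (field; lra).
assert (Hu' : 0 < u / m) by (apply Rdiv_lt_0_compat; lra).
assert (Hv' : 0 < v / m) by (apply Rdiv_lt_0_compat; lra).
rewrite Eu at 1. rewrite Ev at 1.
rewrite <- !Rpower_mult_distr by auto.
pose proof (bern a (u/m) Ha Hu'). pose proof (bern a (v/m) Ha Hv').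
pose proof (Rpower_pos m a).
assert (E2 : u / m + v / m = 2) by (unfold m; field; lra).
set (P := Rpower m a) in *.
assert (K1 : P * Rpower (u/m) a <= P * (1 - a + a * (u/m))) by (apply Rmult_le_compat_l; lra).
assert (K2 : P * Rpower (v/m) a <= P * (1 - a + a * (v/m))) by (apply Rmult_le_compat_l; lra).
assert (E3 : P * (1 - a + a * (u/m)) + P * (1 - a + a * (v/m)) = P * (2 - 2*a + a * (u/m + v/m))) by ring.
rewrite E2 in E3. lra.
Qed.

Lemma subadd a x A : 0 <= a <= 1 -> 1 <= x -> 0 <= A ->
  Rpower (x + A) a <= Rpower x a + A.
Proof.
intros Ha Hx HA.
assert (E : x + A = x * (1 + A / x)) by (field; lra).
assert (HA' : 0 < 1 + A / x).
{ assert (0 <= A / x) by (apply Rdiv_le_0_compat; lra). lra. }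
rewrite E, <- Rpower_mult_distr by lra.
pose proof (bern a (1 + A/x) Ha HA').
pose proof (Rpower_pos x a).
assert (Hle : Rpower x a <= x).
{ rewrite <- (Rpower_1 x) at 2 by lra. apply Rle_Rpower; lra. }
assert (Hq : Rpower x a * (A / x) <= A).
{ unfold Rdiv. rewrite <- Rmult_assoc, (Rmult_comm _ A), Rmult_assoc.
  assert (Rpower x a * / x <= 1).
  { apply (Rmult_le_reg_r x); [lra|]. rewrite Rmult_assoc, Rinv_l by lra. lra. }
  assert (0 <= Rpower x a * / x).
  { apply Rmult_le_pos; [lra| left; apply Rinv_0_lt_compat; lra]. }
  nra. }
assert (0 <= A / x) by (apply Rdiv_le_0_compat; lra).
nra.
Qed.

Section Main.
Variable e : R.
Hypothesis He : e ^ 3 + e ^ 2 + e - 2 = 0.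

Lemma e_bounds : 0 < e < 1 /\ 1 < e ^ 2 + e.
Proof.
assert (0 < e).
{ destruct (Rle_lt_dec e 0); auto. nra. }
assert (e < 1) by nra.
split; [lra|]. nra.
Qed.

Definition al := ln 2 / ln (2 / e).

Lemma al_bounds : 0 < al < 1.
Proof.
destruct e_bounds as [[H0 H1] _].
assert (Hl2 : 0 < ln 2) by (rewrite <- ln_1; apply ln_increasing; lra).
assert (Hlt : ln 2 < ln (2 / e)).
{ apply ln_increasing; [lra|]. apply (Rmult_lt_reg_r e); [lra|].
  unfold Rdiv; rewrite Rmult_assoc, Rinv_l by lra; nra. }
unfold al; split.
- apply Rdiv_lt_0_compat; lra.
- apply (Rmult_lt_reg_r (ln (2/e))); [lra|]. unfold Rdiv.
  rewrite Rmult_assoc, Rinv_l by lra. lra.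
Qed.

Lemma scale z : 0 < z -> 2 * Rpower (e / 2 * z) al = Rpower z al.
Proof.
intros Hz. destruct e_bounds as [[H0 H1] _].
rewrite <- Rpower_mult_distr by lra.
assert (Ee : Rpower (e / 2) al = / 2).
{ unfold Rpower, al.
  assert (E1 : ln (e / 2) = - ln (2 / e)).
  { rewrite <- ln_Rinv by (apply Rdiv_lt_0_compat; lra). f_equal. field. lra. }
  assert (Hl : ln (2 / e) <> 0).
  { apply ln_neq_0; [|apply Rdiv_lt_0_compat; lra].
    intro E. assert (2 = e) by (apply (Rmult_eq_reg_r (/e)); [|apply Rinv_neq_0_compat; lra];
      rewrite Rinv_r by lra; exact E). lra. }
  rewrite E1. replace (ln 2 / ln (2 / e) * - ln (2 / e)) with (- ln 2) by (field; auto).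
  rewrite exp_Ropp, exp_ln by lra. reflexivity. }
rewrite Ee. field.
Qed.

Definition Acst := 1 - e ^ 3.
Definition qe := Rpower e al.
Definition Zc := (2 + Acst) / (1 - qe).
Definition Yc := Rpower Zc (/ al).
Definition Bc := Yc / (1 - e) + 1.
Definition Gf (x : R) := if Rlt_dec x Yc then Bc else Bc * (Rpower x al - Acst).

Lemma consts :
  0 <= Acst <= 1 /\ 0 < qe < 1 /\ 2 + Acst <= Zc /\ Zc * (1 - qe) = 2 + Acst
  /\ 1 <= Yc /\ Rpower Yc al = Zc /\ 2 <= Bc.
Proof.
destruct e_bounds as [[H0 H1] H2]. destruct al_bounds as [Ha0 Ha1].
assert (HA : 0 <= Acst <= 1) by (unfold Acst; nra).
assert (Hq : 0 < qe < 1).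
{ unfold qe; split; [apply Rpower_pos|]. unfold Rpower.
  rewrite <- exp_0. apply exp_increasing.
  assert (ln e < 0) by (rewrite <- ln_1; apply ln_increasing; lra). nra. }
assert (HZ : Zc * (1 - qe) = 2 + Acst) by (unfold Zc; field; lra).
assert (HZ2 : 2 + Acst <= Zc).
{ unfold Zc. unfold Rdiv. rewrite <- (Rmult_1_r (2 + Acst)) at 1.
  apply Rmult_le_compat_l; [lra|]. rewrite <- Rinv_1. apply Rinv_le_contravar; lra. }
assert (HY : 1 <= Yc).
{ unfold Yc. rewrite <- (Rpower_O Zc) by lra. apply Rle_Rpower; [lra|].
  left; apply Rinv_0_lt_compat; lra. }
assert (HYZ : Rpower Yc al = Zc).
{ unfold Yc. rewrite Rpower_mult, Rinv_l by lra. apply Rpower_1; lra. }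
repeat split; try lra.
unfold Bc. assert (1 <= Yc / (1 - e)).
{ apply (Rmult_le_reg_r (1 - e)); [lra|]. unfold Rdiv; rewrite Rmult_assoc, Rinv_l by lra. lra. }
lra.
Qed.

Lemma step x x0 x1 : Yc <= x -> 0 <= x0 -> 0 <= x1 -> x0 + x1 <= e * (x + Acst) ->
  Gf x0 + Gf x1 <= Bc * (Rpower x al - Acst).
Proof.
intros Hx Hx0 Hx1 Hs.
destruct e_bounds as [[H0 H1] H2]. destruct al_bounds as [Ha0 Ha1].
destruct consts as [HA [Hq [HZ2 [HZ [HY [HYZ HB]]]]]].
assert (Hpx : Zc <= Rpower x al) by (rewrite <- HYZ; apply Rle_Rpower_l; lra).
assert (Hsub : Rpower (x + Acst) al <= Rpower x al + Acst) by (apply subadd; lra).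
assert (Hmain : forall y, Yc <= y -> y <= e * (x + Acst) -> 1 + Rpower y al <= Rpower x al).
{ intros y Hy1 Hy2.
  assert (Rpower y al <= Rpower (e * (x + Acst)) al) by (apply Rle_Rpower_l; lra).
  rewrite <- Rpower_mult_distr in H by lra. fold qe in H.
  assert (qe * Rpower (x + Acst) al <= qe * (Rpower x al + Acst)) by (apply Rmult_le_compat_l; lra).
  assert (Rpower x al * (1 - qe) >= Zc * (1 - qe)) by (apply Rmult_ge_compat_r; lra).
  nra. }
unfold Gf.
destruct (Rlt_dec x0 Yc) as [L0|L0]; destruct (Rlt_dec x1 Yc) as [L1|L1].
- assert (2 <= Rpower x al - Acst) by lra. nra.
- assert (1 + Rpower x1 al <= Rpower x al) by (apply Hmain; lra). nra.
- assert (1 + Rpower x0 al <= Rpower x al) by (apply Hmain; lra). nra.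
- assert (J : Rpower x0 al + Rpower x1 al <= 2 * Rpower ((x0 + x1) / 2) al) by (apply jensen; lra).
  assert (M : Rpower ((x0 + x1) / 2) al <= Rpower (e / 2 * (x + Acst)) al) by (apply Rle_Rpower_l; lra).
  rewrite <- scale in Hsub by lra.
  assert (Rpower x0 al + Rpower x1 al - Acst <= Rpower x al) by lra.
  nra.
Qed.
End Main.
From mathcomp Require Import all_boot zify.
From Stdlib Require Import FunctionalExtensionality Classical ClassicalEpsilon.

Set Implicit Arguments.
Unset Strict Implicit.
Unset Printing Implicit Defensive.
Local Open Scope nat_scope.

Definition isA g := match g with Ga => true | _ => false end.
Definition seclist (x : bool) (g : gen) : seq gen := match g with
 | Ga => [::] | Gb => if x then [:: Gc] else [:: Ga]
 | Gc => if x then [:: Gd] else [:: Ga] | Gd => if x then [:: Gb] else [::] end.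
Definition fl (x : bool) g := if isA g then ~~ x else x.

Fixpoint der (x : bool) (w : seq gen) : seq gen :=
  match w with [::] => [::] | g :: w' => seclist x g ++ der (fl x g) w' end.
Fixpoint flp x (w : seq gen) := match w with [::] => x | g :: w' => flp (fl x g) w' end.

Lemma gact0 g u : gact g u 0 = fl (u 0) g.
Proof. by case: g. Qed.

Lemma wact_cons u g w : wact u (g :: w) = wact (gact g u) w.
Proof. by []. Qed.

Lemma wact_cat u s t : wact u (s ++ t) = wact (wact u s) t.
Proof. by rewrite /wact foldl_cat. Qed.

Lemma shift_gact g u : shift (gact g u) = wact (shift u) (seclist (u 0) g).
Proof.
apply: functional_extensionality => k; rewrite /shift.
by case: g => /=; case: (u 0).
Qed.

Lemma wact0 u w : wact u w 0 = flp (u 0) w.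
Proof. elim: w u => [|g w IH] u; first by []. by rewrite wact_cons IH gact0. Qed.

Lemma shift_wact u w : shift (wact u w) = wact (shift u) (der (u 0) w).
Proof.
elim: w u => [|g w IH] u; first by [].
by rewrite wact_cons IH shift_gact gact0 /= wact_cat.
Qed.

Lemma der_cat x s t : der x (s ++ t) = der x s ++ der (flp x s) t.
Proof. elim: s x => [|g s IH] x //=. by rewrite IH catA. Qed.

Lemma flp_cat x s t : flp x (s ++ t) = flp (flp x s) t.
Proof. elim: s x => [|g s IH] x //=. Qed.

Lemma flp_xor x s : flp x s = xorb x (flp false s).
Proof.
elim: s x => [|g s IH] x /=; first by case: x.
rewrite IH [flp (fl false g) s]IH.
by case: g; case: x; case: (flp false s).
Qed.

Lemma flp_inv x s : flp (flp x s) s = x.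
Proof. rewrite flp_xor [flp x s]flp_xor. by case: x; case: (flp false s). Qed.

Definition pcons (b : bool) (p : point) : point :=
  fun n => match n with 0 => b | k.+1 => p k end.

Lemma point_eta (p : point) : p = pcons (p 0) (shift p).
Proof. apply: functional_extensionality => n. by case: n. Qed.

Lemma orbpt_dec w i :
  let x := flp true (take i w) in
  orbpt w i = pcons (flp x w) (orbpt (der x w) (size (der x (take i w)))).
Proof.
move=> x.
rewrite /orbpt {1}(point_eta (wact rho (drop i w))) shift_wact wact0.
have E : w = take i w ++ drop i w by rewrite cat_take_drop.
have Hx : flp x (take i w) = true by rewrite /x flp_inv.
congr pcons.
  by rewrite {2}E flp_cat Hx.
by rewrite {3}E der_cat Hx drop_size_cat.
Qed.

Lemma gact_S g u k : gact g u k.+1 = wact (shift u) (seclist (u 0) g) k.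
Proof. by rewrite -shift_gact. Qed.

Lemma gact_rho g : isA g = false -> gact g rho = rho.
Proof.
move=> Hg; apply: functional_extensionality => n.
elim: n g Hg => [|k IH] g Hg; first by case: g Hg.
rewrite gact_S /=.
case: g Hg => //= _; exact: IH.
Qed.

Lemma gactAA v : gact Ga (gact Ga v) = v.
Proof. apply: functional_extensionality => n. case: n => //= . by rewrite negbK. Qed.

Definition kmul (g h : gen) : option gen :=
  match g, h with
  | Gb, Gc | Gc, Gb => Some Gd
  | Gb, Gd | Gd, Gb => Some Gc
  | Gc, Gd | Gd, Gc => Some Gb
  | _, _ => None end.
Definition klist g h : seq gen := match kmul g h with Some p => [:: p] | None => [::] end.

Lemma klein g h u : isA g = false -> isA h = false ->
  gact h (gact g u) = wact u (klist g h).
Proof.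
move=> Hg Hh; apply: functional_extensionality => n.
elim: n u g h Hg Hh => [|k IH] u g h Hg Hh.
  by case: g Hg; case: h Hh.
rewrite gact_S gact0 shift_gact.
have -> : fl (u 0) g = u 0 by case: g Hg.
case E: (u 0); case: g Hg; case: h Hh => //= _ _;
  rewrite /klist /= ?gact_S ?E //=;
  try (rewrite gactAA //); try (rewrite IH; done).

Qed.

Fixpoint merge (w : seq gen) : seq gen :=
  match w with
  | [::] => [::]
  | g :: w' =>
      let m := merge w' in
      if isA g then g :: m else
      match m with
      | h :: m' => if isA h then g :: m else klist g h ++ m'
      | [::] => g :: m
      end
  end.

Lemma wact_merge u w : wact u (merge w) = wact u w.
Proof.
elim: w u => [|g w IH] u; first by [].
rewrite [merge (g :: w)]/=.
case Hg: (isA g); first by rewrite !wact_cons IH.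
case Em: (merge w) => [|h m']; first by rewrite -Em !wact_cons IH.
case Hh: (isA h); first by rewrite -Em !wact_cons IH.
by rewrite wact_cat -klein // wact_cons -IH Em wact_cons.
Qed.

Definition SP (w : seq gen) (p : point) := exists i, i <= size w /\ p = orbpt w i.

Lemma SP_cons g w p : SP (g :: w) p <-> p = wact rho (g :: w) \/ SP w p.
Proof.
split.
  case=> [[|i]] [Hi ->]; first by left.
  by right; exists i.
case=> [->|[i [Hi ->]]]; first by exists 0.
by exists i.+1.
Qed.

Lemma SP_cat s t p : SP t p -> SP (s ++ t) p.
Proof.
case=> i [Hi ->]; exists (size s + i); split; first by rewrite size_cat; lia.
rewrite /orbpt drop_cat.
have -> : (size s + i < size s) = false by lia.
by rewrite addKn.
Qed.

Lemma SP_self t : SP t (wact rho t).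
Proof. exists 0; split => //. by rewrite /orbpt drop0. Qed.

Lemma SP_merge w p : SP w p -> SP (merge w) p.
Proof.
elim: w p => [|g w IH] p; first by [].
rewrite [merge (g :: w)]/=.
move/SP_cons=> H.
have Hgen : SP (g :: merge w) p.
  apply/SP_cons; case: H => [->|/IH]; last by right.
  by left; rewrite !wact_cons wact_merge.
case Hg: (isA g) => //.
case Em: (merge w) Hgen => [|h m'] Hgen //.
case Hh: (isA h) => //.
apply: SP_cat.
have Hr : wact rho (h :: m') = wact rho m' by rewrite wact_cons gact_rho.
move/SP_cons: Hgen => [->|]; first by rewrite wact_cons gact_rho // Hr; apply: SP_self.
move/SP_cons=> [->|//]; rewrite Hr; exact: SP_self.
Qed.

Definition newb (f : nat -> point) (i : nat) : bool :=
  if excluded_middle_informative (forall j, j < i -> f j <> f i) then true else false.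

Lemma delta_newb w : delta w = count (newb (orbpt w)) (iota 0 (size w).+1).
Proof. by []. Qed.

Fixpoint inl (x : point) (M : seq point) : Prop :=
  match M with [::] => False | y :: M' => x = y \/ inl x M' end.

Lemma inl_split x M : inl x M -> exists M1 M2, M = M1 ++ x :: M2.
Proof.
elim: M => [|y M IH] //= [->|/IH [M1 [M2 ->]]]; first by exists [::], M.
by exists (y :: M1), M2.
Qed.

Lemma inl_cat x M1 M2 : inl x (M1 ++ M2) <-> inl x M1 \/ inl x M2.
Proof.
elim: M1 => [|y M1 IH] /=; first by split => [|[]] //; right.
rewrite IH; tauto.
Qed.

Lemma inl_map (F : point -> point) x M : inl x M -> inl (F x) (map F M).
Proof. elim: M => [|y M IH] //= [->|/IH]; [left | right] => //. Qed.

Lemma iotaS0 n : iota 0 n.+1 = iota 0 n ++ [:: n].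
Proof. by rewrite -addn1 iotaD. Qed.

Lemma ncount_le f n (M : seq point) :
  (forall i, i < n -> inl (f i) M) -> count (newb f) (iota 0 n) <= size M.
Proof.
elim: n M => [|n IH] M H; first by [].
rewrite iotaS0 count_cat /= addn0 [newb f n]/newb.
case: excluded_middle_informative => Hn.
  have [M1 [M2 EM]] := inl_split (H n (ltnSn n)).
  have : count (newb f) (iota 0 n) <= size (M1 ++ M2).
    apply: IH => i Hi.
    have := H i (ltnW Hi); rewrite EM !inl_cat /= => -[|[|]] //; try tauto.
    move=> E; exfalso; exact: (Hn i Hi E).
  move=> Hc; rewrite EM !size_cat /= in Hc *. lia.
rewrite addn0; apply: IH => i Hi; exact: H (ltnW Hi).
Qed.

Lemma ncount_ex f n : exists M : seq point,
  size M = count (newb f) (iota 0 n) /\ forall i, i < n -> inl (f i) M.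
Proof.
elim: n => [|n [M [HM H]]]; first by exists [::].
rewrite iotaS0 count_cat /= addn0 [newb f n]/newb.
case: excluded_middle_informative => Hn.
  exists (f n :: M); split; first by rewrite /= HM addn1.
  move=> i; rewrite ltnS leq_eqVlt => /orP [/eqP ->|Hi]; first by left.
  by right; apply: H.
exists M; split; first by rewrite HM addn0.
move=> i; rewrite ltnS leq_eqVlt => /orP [/eqP ->|Hi]; last by apply: H.
apply: NNPP => Hnot; apply: Hn => j Hj E.
by apply: Hnot; rewrite -E; apply: H.
Qed.

Lemma delta_cover w (M : seq point) :
  (forall i, i <= size w -> inl (orbpt w i) M) -> delta w <= size M.
Proof. move=> H; rewrite delta_newb; apply: ncount_le => i Hi; apply: H; lia. Qed.

Lemma delta_ex w : exists M : seq point, size M = delta w /\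
  forall p, SP w p -> inl p M.
Proof.
have [M [HM H]] := ncount_ex (orbpt w) (size w).+1.
exists M; split => // p [i [Hi ->]]; apply: H; lia.
Qed.

Lemma delta_merge w : delta w <= delta (merge w).
Proof.
have [M [HM H]] := delta_ex (merge w).
rewrite -HM; apply: delta_cover => i Hi; apply: H; apply: SP_merge.
by exists i.
Qed.

Lemma delta_split w :
  delta w <= delta (merge (der true w)) + delta (merge (der false w)).
Proof.
have [Mt [HMt Ht]] := delta_ex (merge (der true w)).
have [Mf [HMf Hf]] := delta_ex (merge (der false w)).
have Hsz : size (map (pcons (flp true w)) Mt ++ map (pcons (flp false w)) Mf)
  = size Mt + size Mf by rewrite size_cat !size_map.
rewrite -HMt -HMf -Hsz.
apply: delta_cover => i Hi.
rewrite orbpt_dec.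
set x := flp true (take i w).
have HS : SP (merge (der x w)) (orbpt (der x w) (size (der x (take i w)))).
  apply: SP_merge; eexists; split; last by reflexivity.
  rewrite -{2}(cat_take_drop i w) der_cat size_cat; lia.
rewrite inl_cat; case: x HS => HS; [left|right]; apply: inl_map.
  exact: Ht. exact: Hf.
Qed.

Lemma delta_size w : delta w <= (size w).+1.
Proof. by rewrite delta_newb; apply: leq_trans (count_size _ _) _; rewrite size_iota. Qed.

Definition headA (w : seq gen) := match w with [::] => true | h :: _ => isA h end.
Fixpoint nocons (w : seq gen) : bool :=
  match w with [::] => true | g :: w' => (isA g || headA w') && nocons w' end.
Definition nA (w : seq gen) := count (fun g => ~~ isA g) w.
Definition cA (w : seq gen) := count isA w.

Lemma nocons_merge w : nocons (merge w).
Proof.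
elim: w => [|g w IH] //; rewrite [merge (g :: w)]/=.
case Hg: (isA g); first by rewrite /= Hg IH.
case Em: (merge w) IH => [|h m'] IH; first by rewrite /= orbT.
case Hh: (isA h).
  by move: IH => /= /andP [_ IH']; rewrite /= Hh orbT IH'.
move: IH => /= /andP [H1 H2]; rewrite Hh /= in H1.
by rewrite /klist; case: (kmul g h) => [p|] //=; rewrite H1 H2 orbT.
Qed.

Lemma size_merge w : size (merge w) <= size w.
Proof.
elim: w => [|g w IH] //; rewrite [merge (g :: w)]/=.
case Hg: (isA g) => //=.
case Em: (merge w) IH => [|h m'] IH //.
case Hh: (isA h) => //.
rewrite size_cat /klist; case: (kmul g h) => [p|] /= in IH *; lia.
Qed.

Lemma size_der x w : size (der x w) <= nA w.
Proof.
elim: w x => [|g w IH] x //=.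
rewrite size_cat /nA /= -/(nA w).
have := IH (fl x g); case: g; case: x => /=; lia.
Qed.

Lemma nocons_count w : nocons w -> nA w <= cA w + (if headA w then 0 else 1).
Proof.
elim: w => [|g w IH] //= /andP [H1 H2].
rewrite /nA /cA /= -/(nA w) -/(cA w).
have := IH H2; case: g H1 => /=; case: (headA w) => //= _; lia.
Qed.

Lemma nA_lt w : nocons w -> 2 <= size w -> nA w < size w.
Proof.
move=> H Hs; have := nocons_count H.
have E : nA w + cA w = size w.
  by rewrite /nA /cA addnC -(count_predC isA w).
case: (headA w); lia.
Qed.

Lemma nA_cA w : nocons w -> nA w <= cA w + 1.
Proof. move=> H; have := nocons_count H; case: (headA w); lia. Qed.

Local Open Scope R_scope.

Definition wt (e : R) (g : gen) : R :=
  match g with Ga => 1 - e ^ 3 | Gb => e ^ 3 | Gc => 1 - e ^ 2 | Gd => 1 - e end.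
Fixpoint nu (e : R) (w : seq gen) : R :=
  match w with [::] => 0 | g :: w' => wt e g + nu e w' end.
Definition snu (e : R) (g : gen) := nu e (seclist true g) + nu e (seclist false g).
Fixpoint sn (e : R) (w : seq gen) : R :=
  match w with [::] => 0 | g :: w' => snu e g + sn e w' end.

Lemma nu_cat e s t : nu e (s ++ t) = nu e s + nu e t.
Proof. elim: s => [|g s IH] /=; [ring | rewrite IH; ring]. Qed.

Lemma der_sum e x w : nu e (der x w) + nu e (der (~~ x) w) = sn e w.
Proof.
elim: w x => [|g w IH] x /=; first ring.
rewrite !nu_cat.
have -> : fl (~~ x) g = ~~ fl x g by case: g; case: x.
rewrite -(IH (fl x g)) /snu.
case: x; simpl; ring.
Qed.

Section Glue.
Variable e : R.
Hypothesis He : e ^ 3 + e ^ 2 + e - 2 = 0.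

Lemma wt_bounds g : 1 - e <= wt e g <= 1.
Proof.
have [[H0 H1] H2] := e_bounds e He.
case: g => /=; nra.
Qed.

Lemma wt_klein g h : isA g = false -> isA h = false -> nu e (klist g h) <= wt e g + wt e h.
Proof.
have [[H0 H1] H2] := e_bounds e He.
by case: g; case: h => //= _ _; nra.
Qed.

Lemma nu_merge w : nu e (merge w) <= nu e w.
Proof.
elim: w => [|g w IH]; first by simpl; lra.
rewrite [merge (g :: w)]/=.
case Hg: (isA g); first by simpl; lra.
case Em: (merge w) IH => [|h m'] IH; first by simpl in IH |- *; lra.
case Hh: (isA h); first by simpl in IH |- *; lra.
rewrite nu_cat; have := wt_klein Hg Hh; simpl in IH |- *; lra.
Qed.

Lemma nu_size w : (1 - e) * INR (size w) <= nu e w <= INR (size w).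
Proof.
elim: w => [|g w IH]; first by simpl; lra.
have := wt_bounds g; change (size (g :: w)) with (size w).+1; rewrite S_INR [nu e (g :: w)]/=; lra.
Qed.

Lemma INR_count_cons (p : pred gen) g w :
  INR (count p (g :: w)) = (if p g then 1 else 0) + INR (count p w).
Proof.
rewrite [count _ _]/=; case: (p g).
- change (INR (count p w).+1 = 1 + INR (count p w)); rewrite S_INR; ring.
- change (INR (count p w) = 0 + INR (count p w)); ring.
Qed.

Lemma sn_eq w : sn e w + e * (1 - e ^ 3) * INR (cA w) = e * (nu e w + (1 - e ^ 3) * INR (nA w)).
Proof.
elim: w => [|g w IH]; first by rewrite /cA /nA /=; ring.
rewrite /cA /nA -/(cA w) -/(nA w).
have He2 : e * (e ^ 3 + e ^ 2 + e - 2) = 0 by rewrite He; ring.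
rewrite !INR_count_cons.
case: g; rewrite [sn _ _]/= [nu e (_ :: _)]/= /snu /= -/(cA w) -/(nA w); nra.
Qed.

Lemma child_nu w : nocons w ->
  nu e (merge (der true w)) + nu e (merge (der false w)) <= e * (nu e w + Acst e).
Proof.
move=> Hn.
have [[H0 H1] H2] := e_bounds e He.
have H3 := nu_merge (der true w). have H4 := nu_merge (der false w).
have E := der_sum e true w. simpl in E.
have Es := sn_eq w.
have Hc : INR (nA w) <= INR (cA w) + 1.
  rewrite -S_INR; apply: le_INR; apply/leP; rewrite -addn1; exact: nA_cA.
rewrite /Acst.
have HA : 0 <= 1 - e ^ 3 by nra.
have : e * (1 - e ^ 3) * INR (nA w) <= e * (1 - e ^ 3) * (INR (cA w) + 1).
  apply: Rmult_le_compat_l; nra.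
nra.
Qed.

Lemma nu_ge0 w : 0 <= nu e w.
Proof.
have [[H0 H1] H2] := e_bounds e He.
have [H _] := nu_size w; have := pos_INR (size w); nra.
Qed.

Lemma base_bound w : nu e w < Yc e -> INR (delta w) <= Bc e.
Proof.
move=> Hx.
have [[H0 H1] H2] := e_bounds e He.
have [HA [Hq [HZ2 [HZ [HY [HYZ HB]]]]]] := consts e He.
have Hd : INR (delta w) <= INR (size w) + 1.
  rewrite -S_INR; apply: le_INR; apply/leP; exact: delta_size.
have [Hs1 _] := nu_size w.
have : INR (size w) <= Yc e / (1 - e).
  apply: (Rmult_le_reg_r (1 - e)); first lra.
  rewrite /Rdiv Rmult_assoc Rinv_l; lra.
rewrite /Bc; lra.
Qed.

Lemma big_small w : (size w <= 1)%nat -> Yc e <= nu e w ->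
  INR (delta w) <= Bc e * (Rpower (nu e w) (al e) - Acst e).
Proof.
move=> Hs Hx.
have [[H0 H1] H2] := e_bounds e He.
have [HA [Hq [HZ2 [HZ [HY [HYZ HB]]]]]] := consts e He.
have Hpx : Zc e <= Rpower (nu e w) (al e).
  rewrite -HYZ; apply: Rle_Rpower_l; first by have := al_bounds e He; lra.
  lra.
have Hd : INR (delta w) <= 2.
  have : (delta w <= 2)%nat by have := delta_size w; lia.
  move/leP/le_INR; rewrite /= ; lra.
have : 2 <= Rpower (nu e w) (al e) - Acst e by lra.
nra.
Qed.

Lemma main_bound n : forall w, (size w <= n)%nat -> nocons w ->
  INR (delta w) <= Gf e (nu e w).
Proof.
have [[H0 H1] H2] := e_bounds e He.
elim: n => [|n IH] w Hs Hn; rewrite /Gf; case: Rlt_dec => Hx.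
- exact: base_bound.
- apply: big_small; lra || lia.
- exact: base_bound.
- have Hx' : Yc e <= nu e w by lra.
  case: (leqP (size w) 1) => Hs1; first exact: big_small.
  have HnA := nA_lt Hn Hs1.
  have Hc : forall x, (size (merge (der x w)) <= n)%nat.
    move=> x; have := size_merge (der x w); have := size_der x w; lia.
  have IHt := IH _ (Hc true) (nocons_merge _).
  have IHf := IH _ (Hc false) (nocons_merge _).
  have Hsp := delta_split w.
  have : INR (delta w) <= INR (delta (merge (der true w))) + INR (delta (merge (der false w))).
    rewrite -plus_INR; apply: le_INR; apply/leP; rewrite plusE; exact: Hsp.
  have := step e He (nu e w) _ _ Hx' (nu_ge0 (merge (der true w)))
  (nu_ge0 (merge (der false w))) (child_nu Hn).
  lra.
Qed.
End Glue.

Lemma all_flat (a : pred (seq gen)) (L : seq (seq (seq gen))) :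
  all a (flatten L) = all (all a) L.
Proof. by elim: L => //= l L IH; rewrite all_cat IH. Qed.

Lemma words_size n : all (fun w => size w == n)%N (words n).
Proof.
elim: n => [|n IH] //=.
rewrite all_flat all_map.
apply: sub_all IH => w /= /eqP ->; by rewrite !eqxx.
Qed.

Lemma bigmax_bound n (b : R) (r : seq (seq gen)) : 0 <= b ->
  all (fun w => size w == n)%N r ->
  (forall w, size w = n -> INR (delta w) <= b) ->
  INR (\max_(w <- r) delta w) <= b.
Proof.
move=> Hb Hr Hw; elim: r Hr => [|w r IH] Hr.
  by rewrite big_nil /=.
rewrite big_cons; move: Hr => /= /andP [/eqP Hs Hr].
rewrite /maxn; case: ifP => _; [exact: IH | exact: Hw].
Qed.

Lemma word_bound e (He : e ^ 3 + e ^ 2 + e - 2 = 0) w :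
  (1 <= size w)%N -> INR (delta w) <= Bc e * Rpower (INR (size w)) (al e).
Proof.
move=> Hs.
have [[H0 H1] H2] := e_bounds e He.
have [HA [Hq [HZ2 [HZ [HY [HYZ HB]]]]]] := consts e He.
have [Ha0 Ha1] := al_bounds e He.
have Hn1 : 1 <= INR (size w).
  by rewrite -/(INR 1); apply: le_INR; apply/leP.
have Hpn : 1 <= Rpower (INR (size w)) (al e).
  rewrite -(Rpower_O (INR (size w))); last lra.
  apply: Rle_Rpower; lra.
have Hm : INR (delta w) <= INR (delta (merge w)).
  by apply: le_INR; apply/leP; apply: delta_merge.
have Hb := main_bound He (leqnn _) (nocons_merge w).
have Hx0 := nu_ge0 He (merge w).
have Hxn : nu e (merge w) <= INR (size w).
  have := nu_merge He w; have := nu_size He w; lra.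
move: Hb; rewrite /Gf; case: Rlt_dec => Hx Hb.
  have : Bc e <= Bc e * Rpower (INR (size w)) (al e) by nra.
  lra.
have : Rpower (nu e (merge w)) (al e) <= Rpower (INR (size w)) (al e).
  apply: Rle_Rpower_l; lra.
nra.
Qed.

Theorem proposition4p4 (eta : R) :
  (eta ^ 3 + eta ^ 2 + eta - 2 = 0) ->
  let alpha := (ln 2 / ln (2 / eta)) in
  exists C : R, (0 < C) /\ exists N : nat, forall n : nat, le N n ->
    (INR (DeltaG n) <= Rpower (C * INR n) alpha).
Proof.
move=> He alpha.
have [HA [Hq [HZ2 [HZ [HY [HYZ HB]]]]]] := consts eta He.
have [Ha0 Ha1] := al_bounds eta He.
exists (Rpower (Bc eta) (/ al eta)); split; first exact: Rpower_pos.
exists 1%N => n Hn.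
have Hn' : (1 <= n)%N by apply/leP.
have HnR : 0 < INR n by apply: lt_0_INR; apply/ltP.
rewrite -Rpower_mult_distr; last exact: HnR; last exact: Rpower_pos.
rewrite Rpower_mult Rinv_l; last lra.
rewrite Rpower_1; last lra.
apply: (bigmax_bound (n := n)).
- have := Rpower_pos (INR n) alpha; nra.
- exact: words_size.
- move=> w Hw; rewrite -Hw; apply: word_bound => //; rewrite Hw; exact: Hn'.
Qed.
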